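(* Let $p$ be a prime and let $n,\alpha$ be positive integers with $n<p^\alpha$. Let $$J=\{\,j\in\mathbb{Z}:\ 1\le j<p^\alpha,\ p^\alpha-n\in\operatorname{cous}(p^\alpha-j)\,\}.$$ For $j\in J$ write $j-1=\sum_{i=0}^{\alpha-1}j_ip^i$ with $0\le j_i<p$. Then $$n=\sum_{j\in J}\ \prod_{i=0}^{\alpha-1}(j_i+1).$$
   Context: For a positive integer $m$ with base-$p$ expansion $m=m_kp^k+m_{k-1}p^{k-1}+\dots+m_0$ ($0\le m_i<p$, $m_k\ne0$), the set of cousins of $m$ is $\operatorname{cous}(m)=\{m_kp^k+\epsilon_{k-1}m_{k-1}p^{k-1}+\dots+\epsilon_0m_0:\ \epsilon_i\in\{1,-1\}\}$. *)

(* Defs.v *)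
From mathcomp Require Import all_boot all_order all_algebra.
Set Implicit Arguments. Unset Strict Implicit. Unset Printing Implicit Defensive.
Import GRing.Theory Num.Theory.
Local Open Scope ring_scope.

Definition digit (p i m : nat) : nat := ((m %/ p ^ i) %% p)%N.

Definition topidx (p m : nat) : nat := trunc_log p m.

(* the cousin of m obtained with sign choices eps_0, ..., eps_{k-1}
   (eps i = true means the sign -1) *)
Definition cousin_val (p m : nat) (eps : {ffun 'I_(topidx p m) -> bool}) : int :=
  ((digit p (topidx p m) m * p ^ topidx p m)%N)%:Z
  + \sum_(i < topidx p m) (-1) ^+ (eps i) * ((digit p i m * p ^ i)%N)%:Z.

Definition in_cous (p m : nat) (x : int) : bool :=
  [exists eps : {ffun 'I_(topidx p m) -> bool}, cousin_val eps == x].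

(* Main.v *)
Require Import Defs.
From mathcomp Require Import all_boot all_order all_algebra.
From mathcomp Require Import zify ring lra.
Set Implicit Arguments. Unset Strict Implicit. Unset Printing Implicit Defensive.
Import GRing.Theory Num.Theory.

Section S.
Variable p : nat.
Hypothesis p_gt1 : (1 < p)%N.

Lemma digit0 m : digit p 0 m = (m %% p)%N.
Proof. by rewrite /digit expn0 divn1. Qed.

Lemma digitS i m : digit p i.+1 m = digit p i (m %/ p).
Proof. by rewrite /digit expnS divnMA. Qed.

Lemma digitMD i m d : (d < p)%N -> digit p i.+1 (p * m + d) = digit p i m.
Proof.
move=> hd; rewrite digitS mulnC divnMDl ?divn_small ?addn0 //; lia.
Qed.

Lemma digit0MD m d : (d < p)%N -> digit p 0 (p * m + d) = d.
Proof. by move=> hd; rewrite digit0 mulnC modnMDl modn_small. Qed.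

Lemma topidxMD m d : (0 < m)%N -> (d < p)%N ->
  topidx p (p * m + d) = (topidx p m).+1.
Proof.
move=> hm hd; rewrite /topidx; apply: trunc_log_eq => //.
have h1 := trunc_logP p_gt1 hm. have h2 := trunc_log_ltn m p_gt1.
rewrite !(expnS p (trunc_log p m).+1) expnS; apply/andP; split.
  by apply: leq_trans (leq_addr _ _); rewrite leq_mul2l h1 orbT.
apply: (@leq_trans (p * m.+1)); first by rewrite mulnS; lia.
by rewrite leq_mul2l -expnS h2 orbT.
Qed.

Lemma topidx_small m : (m < p)%N -> topidx p m = 0%N.
Proof.
move=> hm; apply/eqP; rewrite /topidx trunc_log_eq0; apply/orP; right; lia.
Qed.

Definition cv (k m : nat) (eps : {ffun 'I_k -> bool}) : int :=
  ((digit p k m * p ^ k)%N)%:Z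
  + \sum_(i < k) (-1) ^+ (eps i) * ((digit p i m * p ^ i)%N)%:Z.

Definition Pc (k m : nat) (x : int) := exists eps : {ffun 'I_k -> bool}, cv m eps = x.

Lemma in_cousE m x : in_cous p m x <-> Pc (topidx p m) m x.
Proof.
split; first by case/existsP => e /eqP h; exists e.
by case=> e h; apply/existsP; exists e; apply/eqP.
Qed.

Lemma cvS k m d (eps : {ffun 'I_k.+1 -> bool}) : (d < p)%N ->
  cv (p * m + d) eps = (p%:Z * cv m [ffun i => eps (lift ord0 i)]
     + (-1) ^+ (eps ord0) * d%:Z)%R.
Proof.
move=> hd; rewrite /cv big_ord_recl /= digitMD // digit0MD // expn0 muln1.
have -> : (\sum_(i<k) (-1)^+ eps (lift ord0 i) * ((digit p (bump 0 i) (p * m + d) * p ^ (bump 0 i))%N)%:Z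
   = p%:Z * \sum_(i<k) (-1)^+ [ffun i => eps (lift ord0 i)] i * ((digit p i m * p ^ i)%N)%:Z)%R.
  rewrite mulr_sumr; apply: eq_bigr => i _.
  rewrite ffunE /bump /= add1n digitMD // expnS mulnCA PoszM; ring.
rewrite expnS mulnCA PoszM; ring.
Qed.

Lemma PcS k m d x : (d < p)%N ->
  Pc k.+1 (p * m + d) x <->
  exists y (b : bool), Pc k m y /\ x = (p%:Z * y + (-1) ^+ b * d%:Z)%R.
Proof.
move=> hd; split.
  case=> e <-; exists (cv m [ffun i => e (lift ord0 i)]), (e ord0).
  by split; [exists [ffun i => e (lift ord0 i)] | rewrite cvS].
case=> y [b [[e' <-] ->]].
exists [ffun i : 'I_k.+1 => if unlift ord0 i is Some j then e' j else b].
rewrite cvS // ffunE unlift_none; congr (_ * _ + _)%R; congr cv.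
by apply/ffunP => i; rewrite !ffunE liftK.
Qed.

Lemma Pc0 m x : Pc 0 m x <-> x = Posz (digit p 0 m).
Proof.
rewrite /Pc /cv; split.
  by case=> e <-; rewrite big_ord0 addr0 expn0 muln1.
move=> ->; exists [ffun i => false]; by rewrite big_ord0 addr0 expn0 muln1.
Qed.


Definition C m x := in_cous p m (Posz x).

Lemma cous_small m x : (m < p)%N -> in_cous p m x <-> x = Posz m.
Proof.
move=> hm; rewrite in_cousE topidx_small // Pc0 digit0 modn_small //.
Qed.

Lemma cous_rec m d x : (0 < m)%N -> (d < p)%N ->
  in_cous p (p * m + d) x <->
  exists y (b : bool), in_cous p m y /\ x = (p%:Z * y + (-1) ^+ b * d%:Z)%R.
Proof.
move=> hm hd; rewrite in_cousE topidxMD // PcS //.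
split; case=> y [b [h1 h2]]; exists y, b; split => //; exact/in_cousE.
Qed.

Lemma parity m y : in_cous p m y -> exists z : int, y = (Posz m + 2%:Z * z)%R.
Proof.
elim/ltn_ind: m y => m IH y.
have [hm|hm] := ltnP m p.
  by move/(cous_small _ hm) => ->; exists 0%R; rewrite mulr0 addr0.
have hm' : (0 < m %/ p)%N by rewrite divn_gt0 //; lia.
have hmd : (m %% p < p)%N by rewrite ltn_mod; lia.
rewrite {1}(divn_eq m p) mulnC => /(cous_rec _ hm' hmd) [y' [b [hy ->]]].
have [|z ->] := IH _ _ _ hy; first by rewrite ltn_Pdiv //; lia.
rewrite {3}(divn_eq m p) PoszD PoszM.
case: b; rewrite /= ?expr1 ?expr0.
  exists (p%:Z * z - (m %% p)%:Z)%R; ring.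
exists (p%:Z * z)%R; ring.
Qed.


Lemma divmodE x n d : (d < p)%N -> x = (p * n + d)%N -> x %/ p = n /\ x %% p = d.
Proof.
move=> hd ->; rewrite mulnC divnMDl ?modnMDl ?divn_small ?modn_small ?addn0 //; lia.
Qed.

Lemma C_rec m d x : (d < p)%N ->
  C (p * m + d) x = ((d == x %% p) && C m (x %/ p))
     || [&& (0 < x %% p)%N, d == p - x %% p & C m (x %/ p).+1].
Proof.
move=> hd; rewrite /C.
have hr : (x %% p < p)%N by rewrite ltn_mod; lia.
have hx := divn_eq x p.
case: (posnP m) => [->|hm].
  rewrite muln0 add0n.
  have h0 : (0 < p)%N by lia.
  apply/idP/idP.
    move/(cous_small _ hd) => [->].
    by rewrite divn_small // modn_small // eqxx /=; apply/orP; left; apply/(cous_small _ h0).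
  case/orP.
    case/andP => /eqP hd' /(cous_small _ h0) [] h.
    apply/(cous_small _ hd); rewrite hd' {1}hx h mul0n add0n //.
  by case/and3P => _ _ /(cous_small _ h0).
apply/idP/idP.
  case/(cous_rec _ hm hd) => y [b [hy]].
  case: y hy => [n|n] hy; last first.
    rewrite NegzE; case: b => /=; rewrite ?expr1 ?expr0; lia.
  case: b => /=; rewrite ?expr1 ?expr0 => h.
    case: (posnP d) => [d0|dpos].
      subst d; have [h1 h2] : x %/ p = n /\ x %% p = 0%N.
        apply: divmodE => //; lia.
      by rewrite h1 h2 eqxx hy.
    have [h1 h2] : x %/ p = n.-1 /\ x %% p = (p - d)%N.
      apply: divmodE; first lia.
      case: n h hy => [|n]; lia.
    have hn : n <> 0%N by move=> n0; subst n; lia.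
    by rewrite h1 h2 prednK ?subKn ?eqxx ?hy ?orbT //; lia.
  have [h1 h2] : x %/ p = n /\ x %% p = d.
    by apply: divmodE => //; lia.
  by rewrite h1 h2 eqxx hy.
case/orP.
  case/andP => /eqP hd' hy; apply/(cous_rec _ hm hd).
  exists (Posz (x %/ p)), false; split => //.
  rewrite /= expr0 mul1r hd' {1}hx; lia.
case/and3P => h0 /eqP hd' hy; apply/(cous_rec _ hm hd).
exists (Posz (x %/ p).+1), true; split => //.
rewrite /= expr1 hd' {1}hx; lia.
Qed.


Lemma C_excl m q : ~~ (C m q && C m q.+1).
Proof.
apply/negP => /andP [/parity [z1 h1] /parity [z2 h2]]; lia.
Qed.

Definition W a m := (\prod_(i < a) (p - digit p i m))%N.

Lemma W_rec a m d : (d < p)%N -> W a.+1 (p * m + d) = ((p - d) * W a m)%N.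
Proof.
move=> hd; rewrite /W big_ord_recl digit0MD //; congr (_ * _)%N.
by apply: eq_bigr => i _; rewrite lift0 digitMD.
Qed.

Definition G a x := (\sum_(m < p ^ a) C m x * W a m)%N.

Lemma reindex N (f : nat -> nat) :
  (\sum_(m < p * N) f m = \sum_(m' < N) \sum_(d < p) f (p * m' + d))%N.
Proof.
elim: N => [|N IH]; first by rewrite muln0 !big_ord0.
rewrite big_ord_recr /= -IH -!(big_mkord xpredT) mulnS addnC.
rewrite (@big_cat_nat _ _ _ (p * N)) //=; last by rewrite leq_addr.
congr (_ + _)%N.
rewrite -{1}(add0n (p * N)) big_addn addKn big_mkord; apply: eq_bigr => i _; by rewrite addnC.
Qed.

Lemma sum_delta c (g : nat -> nat) : (c < p)%N ->
  (\sum_(d < p) (((d : nat) == c) * g d) = g c)%N.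
Proof.
move=> hc; rewrite (bigD1 (Ordinal hc)) //= eqxx mul1n big1 ?addn0 // => i hi.
have -> : ((i : nat) == c) = false.
  apply/negbTE; apply: contra hi => /eqP h; apply/eqP/val_inj; exact h.
by rewrite mul0n.
Qed.

Lemma orb_nat (A B : bool) k : ~~ (A && B) -> ((A || B) * k = A * k + B * k)%N.
Proof. by case: A; case: B => //= _; rewrite ?mul0n ?addn0. Qed.

Lemma inner r (a b : bool) : (r < p)%N -> ~~ (a && b) ->
  (\sum_(d < p) (((d : nat) == r) && a || [&& (0 < r)%N, (d : nat) == p - r & b]) * (p - d)
   = (p - r) * a + (0 < r) * (r * b))%N.
Proof.
move=> hr hab.
rewrite (eq_bigr (fun d : 'I_p => ((d : nat) == r) * (a * (p - d)) +
   ((d : nat) == p - r) * (((0 < r) && b) * (p - d))))%N; last first.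
  move=> i _; rewrite orb_nat; last first.
    by apply: contra hab => /andP [/andP [_ ->] /and3P [_ _ ->]].
  clear hab; by case: (_ == r); case: (_ == p - r); case: (0 < r)%N; case: a; case: b => /=; rewrite ?mul0n ?mul1n ?addn0 ?add0n ?muln0.
rewrite big_split /= (@sum_delta r (fun d => a * (p - d))%N) //.
case: (posnP r) => [r0|rpos].
  rewrite r0 /= big1 ?addn0 ?mul0n ?addn0 1?mulnC // => i _; by rewrite mul0n muln0.
rewrite (@sum_delta (p - r) (fun d => (true && b) * (p - d))%N); last lia.
rewrite /= subKn; last lia.
by clear hab; case: a; case: b; rewrite /= ?muln0 ?muln1 ?mul1n ?mul0n ?addn0.
Qed.

Lemma G_rec a x :
  G a.+1 x = ((p - x %% p) * G a (x %/ p) + (0 < x %% p) * (x %% p * G a (x %/ p).+1))%N.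
Proof.
have hr : (x %% p < p)%N by rewrite ltn_mod; lia.
rewrite /G expnS (reindex _ (fun m => C m x * W a.+1 m)%N).
rewrite (eq_bigr (fun m' : 'I_(p ^ a) => W a m' * ((p - x %% p) * C m' (x %/ p)
    + (0 < x %% p) * (x %% p * C m' (x %/ p).+1)))%N); last first.
  move=> m' _; rewrite -(inner hr (C_excl m' (x %/ p))) big_distrr /=.
  apply: eq_bigr => d _; rewrite W_rec // C_rec //.
  by rewrite mulnA mulnC mulnA.
rewrite !big_distrr -big_split /=; apply: eq_bigr => i _.
move: (C i _) (C i _) (0 < _)%N (W a i) => c1 c2 c3 w.
case: c1; case: c2; case: c3 => /=; nia.
Qed.


Lemma arith N q r : (0 < N)%N -> (r < p)%N ->
  ((p - r) * (N - q) + (0 < r) * (r * (N - q.+1)) = p * N - (q * p + r))%N.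
Proof.
move=> hN hr; case: (posnP r) => [->|rpos] /=.
  by rewrite subn0 mul0n addn0 addn0 mulnBr mulnC (mulnC q p).
case: (leqP N q) => hq.
  have -> : (N - q = 0)%N by lia.
  have -> : (N - q.+1 = 0)%N by lia.
  rewrite !muln0 addn0; apply/esym/eqP; rewrite subn_eq0.
  apply: leq_trans (leq_addr _ _); rewrite mulnC leq_mul2r hq orbT //.
have [k ->] : exists k, N = (q + k.+1)%N by exists (N - q.+1)%N; lia.
have -> : (q + k.+1 - q = k.+1)%N by lia.
have -> : (q + k.+1 - q.+1 = k)%N by lia.
rewrite mulnDr mulnC.
have h1 : (r < p * k.+1)%N by rewrite mulnS; lia.
nia.
Qed.

Lemma G_val a x : G a x = (p ^ a - x)%N.
Proof.
have h0 : (0 < p)%N by lia.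
elim: a x => [|a IH] x.
  rewrite /G expn0 big_ord1 /W big_ord0 muln1 /C.
  have -> : in_cous p 0 (Posz x) = (x == 0%N).
    apply/idP/eqP => [/(cous_small _ h0) [] //| ->]; exact/(cous_small _ h0).
  by case: x.
rewrite G_rec !IH expnS.
have hr : (x %% p < p)%N by rewrite ltn_mod.
have hN : (0 < p ^ a)%N by rewrite expn_gt0 h0.
by rewrite (arith (x %/ p) hN hr) -divn_eq.
Qed.

End S.
Lemma split_core p N x1 y1 x0 y0 : (x0 < p)%N -> (y0 < p)%N ->
  (x1 * p + x0 + (y1 * p + y0) + 1 = p * N)%N ->
  (x0 + y0 + 1 = p)%N /\ (x1 + y1 + 1 = N)%N.
Proof.
move=> hx0 hy0 h.
have hs : (x1 + y1 + 1 = N)%N.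
  case: (ltngtP (x1 + y1 + 1) N) => // c.
    have : ((x1 + y1 + 2) * p <= N * p)%N by rewrite leq_mul2r; apply/orP; right; lia.
    rewrite !mulnDl (mulnC N p); lia.
  have : (N * p <= (x1 + y1) * p)%N by rewrite leq_mul2r; apply/orP; right; lia.
  rewrite !mulnDl (mulnC N p); lia.
split => //; move: h; rewrite -hs !mulnDr muln1 (mulnC p x1) (mulnC p y1); lia.
Qed.

Lemma split_step p N x y : (1 < p)%N -> (x + y + 1 = p * N)%N ->
  (x %% p + y %% p + 1 = p)%N /\ (x %/ p + y %/ p + 1 = N)%N.
Proof.
move=> hp h; apply: split_core; rewrite ?ltn_mod -?divn_eq; lia.
Qed.

Lemma compl p a : (1 < p)%N -> forall x y, (x + y + 1 = p ^ a)%N ->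
  forall i, (i < a)%N -> (digit p i x + digit p i y + 1 = p)%N.
Proof.
move=> hp; elim: a => [//|a IH] x y h [|i] hi.
  by rewrite !digit0; have [] := split_step hp (etrans h (expnS p a)).
rewrite !digitS; apply: IH => //.
by have [] := split_step hp (etrans h (expnS p a)).
Qed.

Theorem mainTheorem10 (p n alpha : nat) :
  prime p -> (0 < n)%N -> (0 < alpha)%N -> (n < p ^ alpha)%N ->
  n = (\sum_(1 <= j < p ^ alpha | in_cous p (p ^ alpha - j) (p ^ alpha - n)%N%:Z)
         \prod_(i < alpha) (digit p i j.-1).+1)%N.
Proof.
move=> pp hn ha hnP.
have p1 := prime_gt1 pp.
have h0 : (0 < p)%N by lia.
have hP : (0 < p ^ alpha)%N by lia.
have Gv := G_val p1 alpha (p ^ alpha - n).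
rewrite subKn in Gv; last lia.
rewrite -{1}Gv /G -(big_mkord xpredT (fun m => C p m (p ^ alpha - n) * W p alpha m)%N) big_ltn //.
have -> : C p 0 (p ^ alpha - n) = false.
  rewrite /C; apply/negbTE/negP => H; have [] := (cous_small p1 _ h0).1 H; lia.
rewrite mul0n add0n big_nat_rev [in RHS]big_mkcond /=.
apply: eq_big_nat => i /andP [hi1 hi2].
have -> : (1 + p ^ alpha - i.+1 = p ^ alpha - i)%N by lia.
rewrite /C; case: (in_cous _ _ _) => /=; last by rewrite mul0n.
have -> : W p alpha (p ^ alpha - i) = \prod_(i0 < alpha) (digit p i0 i.-1).+1.
  rewrite /W; apply: eq_bigr => k _.
  have := @compl p alpha p1 (p ^ alpha - i) i.-1 ltac:(lia) k (ltn_ord k); lia.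
exact: mul1n.
Qed.
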